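(* Consider an $(n+2)$-dimensional ($n\ge1$) static spherically symmetric spacetime with line element $ds^2=-F(r)dt^2+G(r)dr^2+r^2d\ell^2_{S^n}$, solving Einstein's equations $G_{ab}+\Lambda g_{ab}=8\pi T_{ab}$ with energy-momentum tensor $T^b_a=\mathrm{diag}\{-\rho(r),p_r(r),p_\theta(r),\dots,p_\theta(r)\}$ satisfying the dominant energy condition $|p_r(r)|,|p_\theta(r)|\le\rho(r)<+\infty$. Suppose $0<F(r),G(r)<+\infty$ on an interval $(r_i^-,r_i^+)\subset(0,+\infty)$ with $F,F',G\in C^1((r_i^-,r_i^+))$. Then: (i) $F(r)G(r)$ is a nondecreasing function of $r$ on $(r_i^-,r_i^+)$, and hence bounded in a neighbourhood of $r_i^-$; (ii) in the outer region $(r_m^-,+\infty)$ of an asymptotically flat spacetime (i.e. $0<F,G<\infty$ on $(r_m^-,+\infty)$ and $\lim_{r\to+\infty}F(r)=\lim_{r\to+\infty}G(r)=1$), $F(r)G(r)$ is bounded.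
   Context: $d\ell^2_{S^n}$ is the round metric on the unit sphere $S^n$, $G_{ab}$ the Einstein tensor of the metric, $\Lambda$ the cosmological constant. *)

(* Defs.v *)
From Stdlib Require Import Reals Lra.
From Coquelicot Require Import Coquelicot.
Open Scope R_scope.

(* Metric  ds^2 = -F(r) dt^2 + G(r) dr^2 + r^2 dl^2_{S^n}  in dimension n+2.
   Mixed components G^a_b of its Einstein tensor (t-t, r-r, and any angular
   diagonal component; all off-diagonal components vanish), written out in
   terms of F, G and their r-derivatives. *)

Definition Einstein_tt (n : nat) (F G : R -> R) (r : R) : R :=
  - (INR n * (INR n - 1)) / (2 * r ^ 2) * (1 - / G r)
  - INR n * Derive G r / (2 * r * (G r) ^ 2).

Definition Einstein_rr (n : nat) (F G : R -> R) (r : R) : R :=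
  INR n / (2 * r ^ 2) *
    (r * Derive F r / (F r * G r) - (INR n - 1) * (1 - / G r)).

Definition Einstein_thth (n : nat) (F G : R -> R) (r : R) : R :=
  / G r *
    ( Derive (Derive F) r / (2 * F r)
      - (Derive F r) ^ 2 / (4 * (F r) ^ 2)
      - Derive F r * Derive G r / (4 * F r * G r)
      + (INR n - 1) / r * (Derive F r / (2 * F r) - Derive G r / (2 * G r)) )
  - (INR n - 1) * (INR n - 2) / (2 * r ^ 2) * (1 - / G r).

(* On the (open) set I of radii:  0 < F, G < +oo,  F, F', G are C^1,
   Einstein's equations  G^a_b + Lambda delta^a_b = 8 pi T^a_b  with
   T^a_b = diag(-rho, p_r, p_th, ..., p_th), and the dominant energy
   condition |p_r|, |p_th| <= rho (rho real-valued, hence < +oo). *)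
Definition static_solution (n : nat) (Lambda : R) (F G rho pr pth : R -> R)
  (I : R -> Prop) : Prop :=
  forall r, I r ->
    0 < F r /\ 0 < G r /\
    ex_derive F r /\ ex_derive (Derive F) r /\ continuous (Derive (Derive F)) r /\
    ex_derive G r /\ continuous (Derive G) r /\
    Einstein_tt n F G r + Lambda = 8 * PI * (- rho r) /\
    Einstein_rr n F G r + Lambda = 8 * PI * pr r /\
    Einstein_thth n F G r + Lambda = 8 * PI * pth r /\
    Rabs (pr r) <= rho r /\ Rabs (pth r) <= rho r.

(* Main.v *)
Require Import Defs.
From Stdlib Require Import Reals Lra.
From Coquelicot Require Import Coquelicot.
Open Scope R_scope.

Lemma deriv_nonneg n Lambda F G rho pr pth (I : R -> Prop) :
  (1 <= n)%nat -> static_solution n Lambda F G rho pr pth I ->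
  (forall r, I r -> 0 < r) -> forall r, I r ->
  is_derive (fun x => F x * G x) r (Derive F r * G r + F r * Derive G r) /\
  0 <= Derive F r * G r + F r * Derive G r.
Proof.
  intros Hn Hs Hp r Hr.
  destruct (Hs r Hr) as (HF & HG & dF & _ & _ & dG & _ & Ett & Err & _ & Hpr & _).
  pose proof (Hp r Hr) as rpos.
  split.
  - apply (is_derive_mult F G r (Derive F r) (Derive G r)); try (apply Derive_correct; auto).
    intros; apply Rmult_comm.
  - assert (Hsum : 0 <= 8 * PI * (pr r + rho r)).
    { apply Rmult_le_pos. pose proof PI_RGT_0; lra.
      apply Rabs_le_between in Hpr. lra. }
    assert (Heq : Einstein_rr n F G r - Einstein_tt n F G r = 8 * PI * (pr r + rho r)) by lra.
    assert (nR : 1 <= INR n) by (apply (le_INR 1); auto).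
    assert (Heq2 : Derive F r * G r + F r * Derive G r =
       2 * r * F r * G r ^ 2 / INR n * (Einstein_rr n F G r - Einstein_tt n F G r)).
    { unfold Einstein_rr, Einstein_tt. field. repeat split; lra. }
    rewrite Heq2, Heq. apply Rmult_le_pos; auto.
    unfold Rdiv. apply Rmult_le_pos. 
    + assert (0 < G r ^ 2) by (apply pow_lt; lra).
      assert (0 < 2 * r * F r) by (apply Rmult_lt_0_compat; lra). nra.
    + left; apply Rinv_0_lt_compat; lra.
Qed.

Lemma mono n Lambda F G rho pr pth (I : R -> Prop) :
  (1 <= n)%nat -> static_solution n Lambda F G rho pr pth I ->
  (forall r, I r -> 0 < r) -> forall r1 r2, r1 <= r2 ->
  (forall x, r1 <= x <= r2 -> I x) -> F r1 * G r1 <= F r2 * G r2.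
Proof.
  intros Hn Hs Hp r1 r2 H12 Hin.
  destruct (MVT_gen (fun x => F x * G x) r1 r2
     (fun r => Derive F r * G r + F r * Derive G r)) as (c & Hc & Heq).
  - intros x Hx. rewrite Rmin_left in Hx by lra. rewrite Rmax_right in Hx by lra.
    apply (proj1 (deriv_nonneg n Lambda F G rho pr pth I Hn Hs Hp x ltac:(apply Hin; lra))).
  - intros x Hx. rewrite Rmin_left in Hx by lra. rewrite Rmax_right in Hx by lra.
    apply continuity_pt_filterlim. apply (ex_derive_continuous (fun x => F x * G x)).
    eexists. apply (proj1 (deriv_nonneg n Lambda F G rho pr pth I Hn Hs Hp x ltac:(apply Hin; lra))).
  - rewrite Rmin_left in Hc by lra. rewrite Rmax_right in Hc by lra.
    assert (0 <= Derive F c * G c + F c * Derive G c).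
    { apply (proj2 (deriv_nonneg n Lambda F G rho pr pth I Hn Hs Hp c ltac:(apply Hin; lra))). }
    simpl in Heq. nra.
Qed.

Theorem lemma5p1 (n : nat) (Lambda : R) (F G rho pr pth : R -> R) :
  (1 <= n)%nat ->
  (* (i) on any interval (rm, rp) in (0, +oo), rp possibly +oo *)
  (forall (rm : R) (rp : Rbar), 0 <= rm -> Rbar_lt rm rp ->
     static_solution n Lambda F G rho pr pth (fun r => rm < r /\ Rbar_lt r rp) ->
     (forall r1 r2, rm < r1 -> r1 <= r2 -> Rbar_lt r2 rp ->
        F r1 * G r1 <= F r2 * G r2) /\
     (exists delta M, 0 < delta /\
        forall r, rm < r -> r < rm + delta -> Rbar_lt r rp ->
          Rabs (F r * G r) <= M)) /\
  (* (ii) outer region of an asymptotically flat spacetime *)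
  (forall rm : R, 0 <= rm ->
     static_solution n Lambda F G rho pr pth (fun r => rm < r) ->
     is_lim F p_infty 1 -> is_lim G p_infty 1 ->
     exists M, forall r, rm < r -> Rabs (F r * G r) <= M).
Proof.
  intros Hn. split.
  - intros rm rp Hrm Hlt Hs.
    assert (Hp : forall r, rm < r /\ Rbar_lt r rp -> 0 < r) by (intros r [? ?]; lra).
    assert (Hmono : forall r1 r2, rm < r1 -> r1 <= r2 -> Rbar_lt r2 rp ->
        F r1 * G r1 <= F r2 * G r2).
    { intros r1 r2 H1 H12 H2.
      apply (mono n Lambda F G rho pr pth _ Hn Hs Hp r1 r2 H12).
      intros x Hx. split. lra. apply Rbar_le_lt_trans with r2; simpl; auto; lra. }
    split; auto.
    assert (Hr0 : exists r0, rm < r0 /\ Rbar_lt r0 rp).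
    { destruct rp as [p| |]; simpl in Hlt.
      - exists ((rm + p)/2). simpl. split; lra.
      - exists (rm + 1). simpl. split; auto; lra.
      - contradiction. }
    destruct Hr0 as (r0 & H0 & H0').
    exists (r0 - rm), (F r0 * G r0). split. lra.
    intros r H1 H2 H3.
    destruct (Hs r (conj H1 H3)) as (HF & HG & _).
    rewrite Rabs_pos_eq by nra.
    apply Hmono; auto; lra.
  - intros rm Hrm Hs HF HG.
    assert (Hp : forall r, rm < r -> 0 < r) by (intros r ?; lra).
    exists 1. intros r Hr.
    destruct (Hs r Hr) as (HFr & HGr & _).
    rewrite Rabs_pos_eq by nra.
    destruct (Rle_or_lt (F r * G r) 1) as [Hle|Hgt]; auto.
    exfalso.
    pose proof (is_lim_mult F G p_infty 1 1 HF HG ltac:(simpl; auto)) as Hl.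
    simpl in Hl. rewrite Rmult_1_r in Hl.
    apply is_lim_spec in Hl.
    destruct (Hl (mkposreal (F r * G r - 1) ltac:(lra))) as [Mx HMx].
    set (s := Rmax Mx r + 1).
    assert (Hs1 : Mx < s) by (unfold s; pose proof (Rmax_l Mx r); lra).
    assert (Hs2 : r < s) by (unfold s; pose proof (Rmax_r Mx r); lra).
    specialize (HMx s Hs1). simpl in HMx.
    apply Rabs_lt_between in HMx.
    assert (F r * G r <= F s * G s).
    { apply (mono n Lambda F G rho pr pth _ Hn Hs Hp r s); try lra.
      intros x Hx; lra. }
    lra.
Qed.
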